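(* Let $\Lambda=(\Lambda_\nu)_{\nu=1}^d$ with $\Lambda_\nu\subset\mathbb{Z}_+^n$ finite nonempty, $P\in\mathcal{P}_\Lambda$, $S\subset N_n$, and let $\mathbb{F}=(\mathbb{F}_\nu)$ be a $d$-tuple with $\mathbb{F}_\nu$ a face of ${\bf N}(\Lambda_\nu,S)$. Suppose $\sup_{r\in I(S),\xi\in\mathbb{R}^d}|\mathcal{I}(P,\xi,r)|<\infty$, and suppose there is $u=(u_j)\in\bigcap_{\nu=1}^d(\mathbb{F}_\nu^* )^\circ$ with $u_j=0$ for $j\in S_0$ and $u_j>0$ for $j\in S\setminus S_0$, where $S_0\subset S$. Then $$\sup\big\{|\mathcal{I}(P_{\mathbb{F}},\xi,a,b)|:\xi\in\mathbb{R}^d,\ a,b\in I(S_0),\ a_j<b_j\ \forall j\big\}<\infty.$$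
   Context: $P=(P_\nu)$, $P_\nu(t)=\sum_{\mathfrak m\in\Lambda_\nu}c^\nu_{\mathfrak m}t^{\mathfrak m}$ with nonzero real coefficients ($\mathcal{P}_\Lambda$ is the set of such). For $T\subset N_n=\{1,\dots,n\}$, $I(T)=\prod_jI_j$ with $I_j=(0,1)$ for $j\in T$ and $I_j=(0,\infty)$ otherwise. $\mathcal{I}(P,\xi,r)=\lim_{\epsilon\to0}\int_{\prod_j\{\epsilon_j<|t_j|<r_j\}}e^{i\langle\xi,P(t)\rangle}\frac{dt_1}{t_1}\cdots\frac{dt_n}{t_n}$. $\mathcal{I}(P_{\mathbb{F}},\xi,a,b)=\int_{\prod_j\{a_j<|t_j|<b_j\}}\exp\big(i\sum_\nu\xi_\nu\sum_{\mathfrak m\in\mathbb{F}_\nu\cap\Lambda_\nu}c^\nu_{\mathfrak m}t^{\mathfrak m}\big)\frac{dt_1}{t_1}\cdots\frac{dt_n}{t_n}$. $\mathbb{R}_+^S=\{u:u_j\ge0\ (j\in S),u_j=0\ (j\notin S)\}$, $Z(S)=\{u:u_j\ge0\ \forall j\in S\}$, ${\bf N}(\Omega,S)=$ convex hull of $\Omega+\mathbb{R}_+^S$. Face: $\mathbb{F}\subset\mathbb{P}$ with $\mathbb{F}=\emptyset$ or $\exists\mathfrak q,r$: $\langle\mathfrak q,\cdot\rangle=r$ on $\mathbb{F}$, $>r$ on $\mathbb{P}\setminus\mathbb{F}$. For nonempty face, $(\mathbb{F}^* )^\circ=\{\mathfrak q\ne0:\exists r,\langle\mathfrak q,x\rangle=r\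 (x\in\mathbb{F}),\langle\mathfrak q,y\rangle>r\ (y\in\mathbb{P}\setminus\mathbb{F})\}$ relative to $\mathbb{P}={\bf N}(\Lambda_\nu,S)$; for the empty face, $(\mathbb{F}^* )^\circ=Z(S)\setminus\{0\}$. *)

(* Defs.v *)
From Stdlib Require Import Reals List Classical ClassicalEpsilon.
Import ListNotations.
Open Scope R_scope.

(* Conventions: coordinates are 0-indexed, j = 0..n-1 stands for 1..n.
   Vectors in R^n are functions nat -> R (only coordinates j < n matter for
   inner products; points of Newton polyhedra have zero coordinates j >= n).
   Multi-indices in Z_+^n are lists of nat of length n. *)

Fixpoint rsum (k : nat) (f : nat -> R) : R :=
  match k with O => 0 | S k' => rsum k' f + f k' end.

Fixpoint rprod (k : nat) (f : nat -> R) : R :=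
  match k with O => 1 | S k' => rprod k' f * f k' end.

Definition ip (n : nat) (q x : nat -> R) : R := rsum n (fun j => q j * x j).

Definition embed (m : list nat) : nat -> R := fun j => INR (nth j m O).

Definition mono (m : list nat) (t : nat -> R) : R :=
  rprod (length m) (fun j => t j ^ (nth j m O)).

Definition mpoly := list (list nat * R).

Definition supp (p : mpoly) : list (list nat) := map fst p.

(* P_nu in P_Lambda with Lambda_nu = supp (P nu): distinct multi-indices of
   length n, nonzero coefficients, nonempty support. *)
Definition WFpoly (n : nat) (p : mpoly) : Prop :=
  p <> [] /\ NoDup (supp p) /\
  Forall (fun mc => length (fst mc) = n /\ snd mc <> 0) p.

Definition evalP (p : mpoly) (t : nat -> R) : R :=
  fold_right (fun mc acc => snd mc * mono (fst mc) t + acc) 0 p.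

Definition evalPF (F : (nat -> R) -> Prop) (p : mpoly) (t : nat -> R) : R :=
  fold_right (fun mc acc =>
     (if excluded_middle_informative (F (embed (fst mc)))
      then snd mc * mono (fst mc) t else 0) + acc) 0 p.

Definition phaseP (d : nat) (P : nat -> mpoly) (xi : nat -> R) (t : nat -> R) : R :=
  rsum d (fun nu => xi nu * evalP (P nu) t).

Definition phasePF (d : nat) (P : nat -> mpoly) (F : nat -> (nat -> R) -> Prop)
  (xi : nat -> R) (t : nat -> R) : R :=
  rsum d (fun nu => xi nu * evalPF (F nu) (P nu) t).

Definition upd (t : nat -> R) (k : nat) (x : R) : nat -> R :=
  fun j => if Nat.eqb j k then x else t j.

(* iint k lo hi f v : v is the (iterated Riemann) integral of f over
   prod_{j<k} { lo_j < |t_j| < hi_j }. *)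
Fixpoint iint (k : nat) (lo hi : nat -> R) (f : (nat -> R) -> R) (v : R) : Prop :=
  match k with
  | O => v = f (fun _ => 0)
  | S k' =>
      exists g : R -> R,
        (forall x, lo k' < Rabs x < hi k' ->
            iint k' lo hi (fun t => f (upd t k' x)) (g x)) /\
        exists (pr1 : Riemann_integrable g (- hi k') (- lo k'))
               (pr2 : Riemann_integrable g (lo k') (hi k')),
          v = RiemannInt pr1 + RiemannInt pr2
  end.

(* complex numbers as pairs (Re, Im) *)
Definition cmod (z : R * R) : R := sqrt (fst z ^ 2 + snd z ^ 2).
Definition cdist (z w : R * R) : R := cmod (fst z - fst w, snd z - snd w).

(* z = int_{prod_j {lo_j<|t_j|<hi_j}} e^{i phase(t)} dt_1/t_1 ... dt_n/t_n *)
Definition cint (n : nat) (lo hi : nat -> R) (phase : (nat -> R) -> R) (z : R * R) : Prop :=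
  iint n lo hi (fun t => cos (phase t) / rprod n t) (fst z) /\
  iint n lo hi (fun t => sin (phase t) / rprod n t) (snd z).

Definition Ilim (n : nat) (phase : (nat -> R) -> R) (r : nat -> R) (L : R * R) : Prop :=
  forall delta, 0 < delta -> exists eta, 0 < eta /\
    forall eps : nat -> R, (forall j, (j < n)%nat -> 0 < eps j < eta) ->
      (exists z, cint n eps r phase z) /\
      (forall z, cint n eps r phase z -> cdist z L < delta).

Definition inI (n : nat) (T : nat -> Prop) (r : nat -> R) : Prop :=
  forall j, (j < n)%nat -> 0 < r j /\ (T j -> r j < 1).

Definition RplusS (S : nat -> Prop) (u : nat -> R) : Prop :=
  forall j, (S j -> 0 <= u j) /\ (~ S j -> u j = 0).

Definition conv (A : (nat -> R) -> Prop) (x : nat -> R) : Prop :=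
  exists (pts : list (nat -> R)) (lams : list R),
    Forall A pts /\ length lams = length pts /\ Forall (Rle 0) lams /\
    fold_right Rplus 0 lams = 1 /\
    forall j, x j = fold_right Rplus 0
                      (map (fun p => fst p * snd p j) (combine lams pts)).

Definition Newton (Om : list (list nat)) (S : nat -> Prop) : (nat -> R) -> Prop :=
  conv (fun y => exists m u, In m Om /\ RplusS S u /\ forall j, y j = embed m j + u j).

Definition is_face (n : nat) (PP F : (nat -> R) -> Prop) : Prop :=
  (forall x, F x -> PP x) /\
  ((forall x, ~ F x) \/
   exists (q : nat -> R) (r : R),
     (forall x, F x -> ip n q x = r) /\
     (forall y, PP y -> ~ F y -> ip n q y > r)).

Definition dual_int (n : nat) (S : nat -> Prop) (PP F : (nat -> R) -> Prop)
  (q : nat -> R) : Prop :=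
  (exists j, (j < n)%nat /\ q j <> 0) /\
  ((exists x, F x) ->
     exists r, (forall x, F x -> ip n q x = r) /\
               (forall y, PP y -> ~ F y -> ip n q y > r)) /\
  ((forall x, ~ F x) -> forall j, (j < n)%nat -> S j -> 0 <= q j).

(* Main.v *)
Require Import Defs.
From Stdlib Require Import Reals List Classical ClassicalEpsilon Lra Lia FunctionalExtensionality.
From Coquelicot Require Import Coquelicot.
Open Scope R_scope.

Lemma iint_S k lo hi f v : iint (S k) lo hi f v <->
  exists g : R -> R,
    (forall x, lo k < Rabs x < hi k -> iint k lo hi (fun t => f (upd t k x)) (g x)) /\
    ex_RInt g (- hi k) (- lo k) /\ ex_RInt g (lo k) (hi k) /\
    v = RInt g (- hi k) (- lo k) + RInt g (lo k) (hi k).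
Proof.
  simpl; split.
  - intros [g [Hg [p1 [p2 ->]]]]. exists g; repeat split; auto.
    + apply ex_RInt_Reals_1; exact p1.
    + apply ex_RInt_Reals_1; exact p2.
    + rewrite <- !RInt_Reals; reflexivity.
  - intros [g [Hg [e1 [e2 ->]]]]. exists g; split; auto.
    exists (ex_RInt_Reals_0 _ _ _ e1), (ex_RInt_Reals_0 _ _ _ e2).
    rewrite <- !RInt_Reals; reflexivity.
Qed.

Lemma RInt_close (g1 g2 : R -> R) a b E : a <= b -> ex_RInt g1 a b -> ex_RInt g2 a b ->
  (forall x, a < x < b -> Rabs (g1 x - g2 x) <= E) ->
  Rabs (RInt g1 a b - RInt g2 a b) <= (b - a) * E.
Proof.
  intros Hab e1 e2 H.
  assert (ec : ex_RInt (fun _ : R => E) a b) by apply ex_RInt_const.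
  assert (Hp : RInt (fun x => g2 x + E) a b = RInt g2 a b + (b - a) * E).
  { change (fun x => g2 x + E) with (fun x => plus (g2 x) ((fun _ : R => E) x)).
    rewrite (@RInt_plus R_CompleteNormedModule g2 (fun _ => E)); auto. rewrite RInt_const. reflexivity. }
  assert (Hm : RInt (fun x => g2 x - E) a b = RInt g2 a b - (b - a) * E).
  { change (fun x => g2 x - E) with (fun x => minus (g2 x) ((fun _ : R => E) x)).
    rewrite (@RInt_minus R_CompleteNormedModule g2 (fun _ => E)); auto. rewrite RInt_const. reflexivity. }
  assert (ep : ex_RInt (fun x => g2 x + E) a b).
  { apply (ex_RInt_plus g2 (fun _ => E)); auto. }
  assert (em : ex_RInt (fun x => g2 x - E) a b).
  { apply (ex_RInt_minus g2 (fun _ => E)); auto. }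
  assert (H1 : RInt g1 a b <= RInt (fun x => g2 x + E) a b).
  { apply RInt_le; auto. intros x Hx. specialize (H x Hx). apply Rabs_le_between in H. lra. }
  assert (H2 : RInt (fun x => g2 x - E) a b <= RInt g1 a b).
  { apply RInt_le; auto. intros x Hx. specialize (H x Hx). apply Rabs_le_between in H. lra. }
  rewrite Hp in H1; rewrite Hm in H2. apply Rabs_le. lra.
Qed.
Definition inbox k lo hi (t : nat -> R) :=
  (forall j, (j < k)%nat -> lo j < Rabs (t j) < hi j) /\ (forall j, (k <= j)%nat -> t j = 0).
Definition vol k (lo hi : nat -> R) := rprod k (fun j => 2 * (hi j - lo j)).

Lemma inbox_upd k lo hi t x : inbox k lo hi t -> lo k < Rabs x < hi k ->
  inbox (S k) lo hi (upd t k x).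
Proof.
  intros [H1 H2] Hx; split; intros j Hj; unfold upd.
  - destruct (Nat.eqb_spec j k). subst; auto. apply H1; lia.
  - destruct (Nat.eqb_spec j k). lia. apply H2; lia.
Qed.

Lemma inbox0 lo hi : inbox 0 lo hi (fun _ => 0).
Proof. split; intros; [lia | reflexivity]. Qed.

Lemma abs_pos_iff lo hi x : 0 <= lo -> lo < x < hi -> lo < Rabs x < hi.
Proof. intros. rewrite Rabs_right; lra. Qed.
Lemma abs_neg_iff lo hi x : 0 <= lo -> - hi < x < - lo -> lo < Rabs x < hi.
Proof. intros. rewrite Rabs_left; lra. Qed.

Lemma iint_approx k : forall lo hi f g v w e,
  (forall j, (j < k)%nat -> 0 <= lo j <= hi j) ->
  (forall t, inbox k lo hi t -> Rabs (f t - g t) <= e) ->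
  iint k lo hi f v -> iint k lo hi g w -> Rabs (v - w) <= e * vol k lo hi.
Proof.
  induction k as [|k IH]; intros lo hi f g v w e Hl Hfg Hv Hw.
  - simpl in Hv, Hw. subst. unfold vol; simpl. rewrite Rmult_1_r. apply Hfg, inbox0.
  - apply iint_S in Hv. apply iint_S in Hw.
    destruct Hv as [g1 [Hg1 [e11 [e12 ->]]]]. destruct Hw as [g2 [Hg2 [e21 [e22 ->]]]].
    assert (Hl' : forall j, (j < k)%nat -> 0 <= lo j <= hi j) by (intros; apply Hl; lia).
    assert (Hk := Hl k (Nat.lt_succ_diag_r k)).
    assert (Hin : forall x, lo k < Rabs x < hi k -> Rabs (g1 x - g2 x) <= e * vol k lo hi).
    { intros x Hx. eapply IH; [exact Hl' | | apply Hg1, Hx | apply Hg2, Hx].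
      intros t Ht. apply Hfg. apply inbox_upd; auto. }
    assert (A1 : Rabs (RInt g1 (- hi k) (- lo k) - RInt g2 (- hi k) (- lo k)) <= (- lo k - - hi k) * (e * vol k lo hi)).
    { apply RInt_close; auto. lra. intros x Hx. apply Hin. apply abs_neg_iff; lra. }
    assert (A2 : Rabs (RInt g1 (lo k) (hi k) - RInt g2 (lo k) (hi k)) <= (hi k - lo k) * (e * vol k lo hi)).
    { apply RInt_close; auto. lra. intros x Hx. apply Hin. apply abs_pos_iff; lra. }
    unfold vol; simpl; fold (vol k lo hi).
    eapply Rle_trans. 2: apply Req_le; reflexivity.
    replace (RInt g1 (- hi k) (- lo k) + RInt g1 (lo k) (hi k) - (RInt g2 (- hi k) (- lo k) + RInt g2 (lo k) (hi k)))
      with ((RInt g1 (- hi k) (- lo k) - RInt g2 (- hi k) (- lo k)) + (RInt g1 (lo k) (hi k) - RInt g2 (lo k) (hi k))) by ring.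
    eapply Rle_trans. apply Rabs_triang.
    replace (e * (vol k lo hi * (2 * (hi k - lo k)))) with ((- lo k - - hi k) * (e * vol k lo hi) + (hi k - lo k) * (e * vol k lo hi)) by ring.
    lra.
Qed.
Lemma iint_ext_lh k : forall lo hi lo' hi' f v,
  (forall j, (j < k)%nat -> lo j = lo' j /\ hi j = hi' j) ->
  iint k lo hi f v -> iint k lo' hi' f v.
Proof.
  induction k as [|k IH]; intros lo hi lo' hi' f v Hj Hv; [exact Hv|].
  apply iint_S in Hv; apply iint_S.
  destruct (Hj k (Nat.lt_succ_diag_r k)) as [E1 E2].
  destruct Hv as [g [Hg [e1 [e2 ->]]]]. exists g.
  rewrite <- E1, <- E2. repeat split; auto.
  intros x Hx. eapply IH; [|apply Hg, Hx]. intros; apply Hj; lia.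
Qed.

Definition cmul (c t : nat -> R) : nat -> R := fun j => c j * t j.

Lemma cmul_upd c t k x : cmul c (upd t k x) = upd (cmul c t) k (c k * x).
Proof.
  apply functional_extensionality; intro j; unfold cmul, upd.
  destruct (Nat.eqb_spec j k); subst; reflexivity.
Qed.

Lemma iint_scale k : forall (c lo hi : nat -> R) f v lam,
  (forall j, (j < k)%nat -> 0 < c j) ->
  iint k (cmul c lo) (cmul c hi) f v ->
  iint k lo hi (fun s => lam * rprod k c * f (cmul c s)) (lam * v).
Proof.
  induction k as [|k IH]; intros c lo hi f v lam Hc Hv.
  - simpl in *. subst. rewrite Rmult_1_r. f_equal. f_equal.
    apply functional_extensionality; intro j; unfold cmul; ring.
  - apply iint_S in Hv; apply iint_S.
    destruct Hv as [g [Hg [e1 [e2 ->]]]].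
    assert (ck : 0 < c k) by (apply Hc; lia).
    exists (fun y => lam * c k * g (c k * y)).
    assert (EX : forall a b, ex_RInt g (c k * a) (c k * b) ->
       ex_RInt (fun y => lam * c k * g (c k * y)) a b /\
       RInt (fun y => lam * c k * g (c k * y)) a b = lam * RInt g (c k * a) (c k * b)).
    { intros a b Hab.
      assert (Hl := ex_RInt_comp_lin g (c k) 0 a b).
      assert (Hr := RInt_comp_lin g (c k) 0 a b).
      rewrite !Rplus_0_r in Hl, Hr. specialize (Hl Hab). specialize (Hr Hab).
      assert (Hs := ex_RInt_scal _ _ _ lam Hl).
      assert (Hs2 := RInt_scal _ _ _ lam Hl).
      assert (EQ : forall y, scal lam (scal (c k) (g (c k * y + 0))) = lam * c k * g (c k * y)).
      { intro y. rewrite Rplus_0_r.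
        unfold scal; simpl; unfold mult; simpl. ring. }
      split.
      + eapply ex_RInt_ext; [|exact Hs]. intros; cbv beta. apply EQ.
      + rewrite <- Hr. rewrite <- (RInt_ext _ _ _ _ (fun y _ => EQ y)). exact Hs2. }
    unfold cmul in e1, e2.
    replace (- (c k * hi k)) with (c k * - hi k) in e1 by ring.
    replace (- (c k * lo k)) with (c k * - lo k) in e1 by ring.
    destruct (EX _ _ e1) as [f1 r1]. destruct (EX _ _ e2) as [f2 r2].
    repeat split; auto.
    + intros x Hx.
      assert (Hx' : c k * lo k < Rabs (c k * x) < c k * hi k).
      { rewrite Rabs_mult, (Rabs_right (c k)) by lra. split; apply Rmult_lt_compat_l; lra. }
      specialize (Hg _ Hx').
      specialize (IH c lo hi _ _ (lam * c k) ltac:(intros; apply Hc; lia) Hg).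
      replace (fun s => lam * rprod (S k) c * f (cmul c (upd s k x)))
        with (fun s => lam * c k * rprod k c * f (upd (cmul c s) k (c k * x))).
      exact IH.
      apply functional_extensionality; intro s. rewrite cmul_upd. simpl. cbv beta. ring.
    + rewrite r1, r2. unfold cmul.
      replace (c k * - hi k) with (- (c k * hi k)) by ring.
      replace (c k * - lo k) with (- (c k * lo k)) by ring. ring.
Qed.
Definition cbox k lo hi (t : nat -> R) :=
  (forall j, (j < k)%nat -> lo j <= Rabs (t j) <= hi j) /\ (forall j, (k <= j)%nat -> t j = 0).
Definition distk k (t t' : nat -> R) := rsum k (fun j => Rabs (t j - t' j)).
Definition lipb k lo hi (f : (nat -> R) -> R) := exists L, 0 <= L /\
  forall t t', cbox k lo hi t -> cbox k lo hi t' -> Rabs (f t - f t') <= L * distk k t t'.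

Lemma rsum_ext k f g : (forall j, (j < k)%nat -> f j = g j) -> rsum k f = rsum k g.
Proof.
  induction k; simpl; intros H; auto. rewrite IHk by (intros; apply H; lia). rewrite H by lia; auto.
Qed.
Lemma rprod_ext k f g : (forall j, (j < k)%nat -> f j = g j) -> rprod k f = rprod k g.
Proof.
  induction k; simpl; intros H; auto. rewrite IHk by (intros; apply H; lia). rewrite H by lia; auto.
Qed.
Lemma rsum_nonneg k f : (forall j, (j < k)%nat -> 0 <= f j) -> 0 <= rsum k f.
Proof.
  induction k; simpl; intros H. lra. assert (0 <= f k) by (apply H; lia).
  assert (0 <= rsum k f) by (apply IHk; intros; apply H; lia). lra.
Qed.
Lemma rprod_nonneg k f : (forall j, (j < k)%nat -> 0 <= f j) -> 0 <= rprod k f.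
Proof.
  induction k; simpl; intros H. lra. apply Rmult_le_pos. apply IHk; intros; apply H; lia. apply H; lia.
Qed.
Lemma rprod_pos k f : (forall j, (j < k)%nat -> 0 < f j) -> 0 < rprod k f.
Proof.
  induction k; simpl; intros H. lra. apply Rmult_lt_0_compat. apply IHk; intros; apply H; lia. apply H; lia.
Qed.

Lemma vol_nonneg k lo hi : (forall j, (j < k)%nat -> lo j <= hi j) -> 0 <= vol k lo hi.
Proof. intros H. apply rprod_nonneg. intros j Hj. specialize (H j Hj). lra. Qed.

Lemma cbox_upd k lo hi t x : cbox k lo hi t -> lo k <= Rabs x <= hi k ->
  cbox (S k) lo hi (upd t k x).
Proof.
  intros [H1 H2] Hx; split; intros j Hj; unfold upd.
  - destruct (Nat.eqb_spec j k). subst; auto. apply H1; lia.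
  - destruct (Nat.eqb_spec j k). lia. apply H2; lia.
Qed.

Lemma inbox_cbox k lo hi t : inbox k lo hi t -> cbox k lo hi t.
Proof. intros [H1 H2]; split; auto. intros j Hj; specialize (H1 j Hj); lra. Qed.

Lemma distk_upd k t t' x y : distk (S k) (upd t k x) (upd t' k y) = distk k t t' + Rabs (x - y).
Proof.
  unfold distk; simpl. unfold upd at 3 4. rewrite Nat.eqb_refl. f_equal.
  apply rsum_ext. intros j Hj. unfold upd. destruct (Nat.eqb_spec j k); [lia|auto].
Qed.

Lemma lipb_inner k lo hi f x : lipb (S k) lo hi f -> lo k <= Rabs x <= hi k ->
  lipb k lo hi (fun t => f (upd t k x)).
Proof.
  intros [L [HL H]] Hx. exists L; split; auto. intros t t' Ht Ht'.
  eapply Rle_trans. apply H; apply cbox_upd; auto.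
  rewrite distk_upd. unfold Rminus; rewrite Rplus_opp_r, Rabs_R0, Rplus_0_r. lra.
Qed.

Definition clampS (lo hi x : R) : R :=
  if Rle_dec 0 x then Rmax lo (Rmin hi x) else - Rmax lo (Rmin hi (- x)).

Lemma clampS_box lo hi x : 0 < lo <= hi -> lo <= Rabs (clampS lo hi x) <= hi.
Proof.
  intros H. unfold clampS. destruct (Rle_dec 0 x); [|rewrite Rabs_Ropp];
  unfold Rmax, Rmin; repeat destruct Rle_dec; rewrite Rabs_right; lra.
Qed.

Lemma clampS_id lo hi x : 0 < lo -> lo < Rabs x < hi -> clampS lo hi x = x.
Proof.
  intros H Hx. unfold clampS. destruct (Rle_dec 0 x).
  - rewrite Rabs_right in Hx by lra. unfold Rmax, Rmin; repeat destruct Rle_dec; lra.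
  - rewrite Rabs_left in Hx by lra. unfold Rmax, Rmin; repeat destruct Rle_dec; lra.
Qed.

Lemma clampS_lip lo hi x y : 0 < lo -> (0 <= x /\ 0 <= y \/ x < 0 /\ y < 0) ->
  Rabs (clampS lo hi x - clampS lo hi y) <= Rabs (x - y).
Proof.
  intros H [[Hx Hy]|[Hx Hy]]; unfold clampS;
  repeat destruct Rle_dec; try lra;
  unfold Rmax, Rmin; repeat destruct Rle_dec; apply Rabs_le; split;
  (destruct (Rle_dec 0 (x - y)); [rewrite (Rabs_right (x - y)) by lra | rewrite (Rabs_left (x - y)) by lra]); lra.
Qed.

Lemma cont_lip (G : R -> R) z K : z <> 0 -> 0 <= K ->
  (forall x, Rabs (x - z) < Rabs z -> Rabs (G x - G z) <= K * Rabs (x - z)) -> continuous G z.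
Proof.
  intros Hz HK H. apply continuity_pt_filterlim.
  intros eps Heps.
  assert (Hz' : 0 < Rabs z) by (apply Rabs_pos_lt; auto).
  exists (Rmin (Rabs z) (eps / (K + 1))). split.
  - apply Rmin_pos; auto. apply Rdiv_lt_0_compat; lra.
  - intros x [_ Hx]. unfold R_dist in *. simpl in *. unfold R_dist in *.
    assert (H1 : Rabs (x - z) < Rabs z) by (eapply Rlt_le_trans; [exact Hx| apply Rmin_l]).
    assert (H2 : Rabs (x - z) < eps / (K + 1)) by (eapply Rlt_le_trans; [exact Hx| apply Rmin_r]).
    eapply Rle_lt_trans. apply H; auto.
    apply Rle_lt_trans with (K * (eps / (K + 1))).
    apply Rmult_le_compat_l; auto. lra.
    assert (E : K * (eps / (K + 1)) = eps * (K / (K + 1))) by (field; lra).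
    rewrite E. assert (K / (K + 1) < 1).
    { apply Rmult_lt_reg_r with (K + 1). lra. field_simplify; lra. }
    assert (0 <= K / (K+1)) by (apply Rdiv_le_0_compat; lra). nra.
Qed.

Lemma iint_exists k : forall lo hi f, (forall j, (j < k)%nat -> 0 < lo j <= hi j) ->
  lipb k lo hi f -> exists v, iint k lo hi f v.
Proof.
  induction k as [|k IH]; intros lo hi f Hl Hf.
  - exists (f (fun _ => 0)). reflexivity.
  - assert (Hk := Hl k (Nat.lt_succ_diag_r k)).
    assert (Hl' : forall j, (j < k)%nat -> 0 < lo j <= hi j) by (intros; apply Hl; lia).
    set (cl := clampS (lo k) (hi k)).
    assert (Ex : forall x, exists v, iint k lo hi (fun t => f (upd t k (cl x))) v).
    { intro x. apply IH; auto. apply lipb_inner; auto. apply clampS_box; lra. }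
    set (G := fun x => proj1_sig (constructive_indefinite_description _ (Ex x))).
    assert (HG : forall x, iint k lo hi (fun t => f (upd t k (cl x))) (G x)).
    { intro x. unfold G. destruct constructive_indefinite_description; auto. }
    destruct Hf as [L [HL Hf]].
    assert (Vn : 0 <= vol k lo hi) by (apply vol_nonneg; intros j Hj; specialize (Hl' j Hj); lra).
    assert (Lip : forall x y, Rabs (G x - G y) <= L * Rabs (cl x - cl y) * vol k lo hi).
    { intros x y. apply (iint_approx k lo hi (fun t => f (upd t k (cl x))) (fun t => f (upd t k (cl y))) (G x) (G y) (L * Rabs (cl x - cl y))); auto.
      intros j Hj; specialize (Hl' j Hj); lra.
      intros t Ht. eapply Rle_trans. apply Hf; apply cbox_upd; auto using inbox_cbox;
      apply clampS_box; lra.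
      rewrite distk_upd. replace (distk k t t) with 0. rewrite Rplus_0_l. lra.
      unfold distk. symmetry. replace 0 with (rsum k (fun _ => 0)).
      apply rsum_ext. intros; unfold Rminus; rewrite Rplus_opp_r, Rabs_R0; auto.
      clear. induction k; simpl; auto. rewrite IHk; ring. }
    assert (Cont : forall z, z <> 0 -> continuous G z).
    { intros z Hz. apply cont_lip with (L * vol k lo hi); auto. apply Rmult_le_pos; auto.
      intros x Hx. eapply Rle_trans. apply Lip.
      rewrite Rmult_assoc, (Rmult_comm (Rabs _)), <- Rmult_assoc.
      apply Rmult_le_compat_l. apply Rmult_le_pos; auto.
      apply clampS_lip. lra.
      destruct (Rle_dec 0 z).
      - left. assert (z > 0) by (destruct r; auto; congruence).
        rewrite (Rabs_right z) in Hx by lra. apply Rabs_def2 in Hx. split; lra.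
      - right. rewrite (Rabs_left z) in Hx by lra. apply Rabs_def2 in Hx. split; lra. }
    exists (RInt G (- hi k) (- lo k) + RInt G (lo k) (hi k)).
    apply iint_S. exists G. repeat split; auto.
    + intros x Hx. assert (E : cl x = x) by (apply clampS_id; lra). pose proof (HG x) as H; rewrite E in H; exact H.
    + apply (@ex_RInt_continuous R_CompleteNormedModule). intros z Hz. apply Cont.
      rewrite Rmin_left, Rmax_right in Hz by lra. lra.
    + apply (@ex_RInt_continuous R_CompleteNormedModule). intros z Hz. apply Cont.
      rewrite Rmin_left, Rmax_right in Hz by lra. lra.
Qed.
Lemma chas (g : R -> R) a b c : ex_RInt g a b -> ex_RInt g b c ->
  RInt g a c = RInt g a b + RInt g b c.
Proof. intros. rewrite <- (@RInt_Chasles R_CompleteNormedModule g a b c); auto. Qed.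

Lemma piece (g g1 : R -> R) a b : a <= b -> (forall x, a < x < b -> g1 x = g x) ->
  ex_RInt g1 a b -> ex_RInt g a b /\ RInt g a b = RInt g1 a b.
Proof.
  intros Hab H e.
  split. eapply ex_RInt_ext; [|exact e]. rewrite Rmin_left, Rmax_right by auto. exact H.
  symmetry. apply RInt_ext. rewrite Rmin_left, Rmax_right by auto. exact H.
Qed.

Lemma upd_same (t : nat -> R) k x : upd t k x k = x.
Proof. unfold upd; rewrite Nat.eqb_refl; auto. Qed.
Lemma upd_other (t : nat -> R) k x j : j <> k -> upd t k x j = t j.
Proof. intros; unfold upd; destruct (Nat.eqb_spec j k); [lia|auto]. Qed.

Lemma lipb_inner' k lo hi f x : lipb (S k) lo hi f -> lo k <= Rabs x <= hi k ->
  lipb k lo hi (fun t => f (upd t k x)).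
Proof. apply lipb_inner. Qed.

Lemma iint_split k : forall lo hi f m cc v1 v2, (m < k)%nat ->
  (forall j, (j < k)%nat -> 0 < lo j <= hi j) -> lo m < cc < hi m -> lipb k lo hi f ->
  iint k lo (upd hi m cc) f v1 -> iint k (upd lo m cc) hi f v2 -> iint k lo hi f (v1 + v2).
Proof.
  induction k as [|k IH]; intros lo hi f m cc v1 v2 Hm Hl Hc Hf H1 H2; [lia|].
  assert (Hk := Hl k (Nat.lt_succ_diag_r k)).
  assert (Hl' : forall j, (j < k)%nat -> 0 < lo j <= hi j) by (intros; apply Hl; lia).
  apply iint_S in H1, H2. apply iint_S.
  destruct H1 as [g1 [Hg1 [e11 [e12 ->]]]]. destruct H2 as [g2 [Hg2 [e21 [e22 ->]]]].
  destruct (Nat.eq_dec m k) as [->|Hmk].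
  - assert (E1 : upd hi k cc k = cc) by apply upd_same. assert (E2 : upd lo k cc k = cc) by apply upd_same.
    rewrite E1, E2 in *.
    assert (Ex : forall x, exists v, lo k < Rabs x < hi k -> iint k lo hi (fun t => f (upd t k x)) v).
    { intro x. destruct (classic (lo k < Rabs x < hi k)) as [Hx|Hx].
      - destruct (iint_exists k lo hi (fun t => f (upd t k x)) Hl') as [v Hv].
        apply lipb_inner; auto. lra. exists v; auto.
      - exists 0; tauto. }
    set (h := fun x => proj1_sig (constructive_indefinite_description _ (Ex x))).
    assert (Hh : forall x, lo k < Rabs x < hi k -> iint k lo hi (fun t => f (upd t k x)) (h x)).
    { intro x. unfold h. destruct constructive_indefinite_description; auto. }
    set (g := fun x => if Rlt_dec (Rabs x) cc then g1 x else if Rlt_dec cc (Rabs x) then g2 x else h x).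
    assert (P1 := piece g g1 (- cc) (- lo k) ltac:(lra)
      ltac:(intros x Hx; unfold g; rewrite Rabs_left by lra; destruct Rlt_dec; [auto|lra]) e11).
    assert (P2 := piece g g1 (lo k) cc ltac:(lra)
      ltac:(intros x Hx; unfold g; rewrite Rabs_right by lra; destruct Rlt_dec; [auto|lra]) e12).
    assert (P3 := piece g g2 (- hi k) (- cc) ltac:(lra)
      ltac:(intros x Hx; unfold g; rewrite Rabs_left by lra; destruct Rlt_dec; [lra|];
            destruct Rlt_dec; [auto|lra]) e21).
    assert (P4 := piece g g2 cc (hi k) ltac:(lra)
      ltac:(intros x Hx; unfold g; rewrite Rabs_right by lra; destruct Rlt_dec; [lra|];
            destruct Rlt_dec; [auto|lra]) e22).
    destruct P1 as [f1 r1], P2 as [f2 r2], P3 as [f3 r3], P4 as [f4 r4].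
    exists g; repeat split.
    + intros x Hx. unfold g. destruct Rlt_dec.
      * eapply iint_ext_lh; [|apply Hg1; lra]. intros j Hj; rewrite upd_other by lia; auto.
      * destruct Rlt_dec.
        -- eapply iint_ext_lh; [|apply Hg2; lra]. intros j Hj; rewrite upd_other by lia; auto.
        -- apply Hh; auto.
    + eapply ex_RInt_Chasles; [exact f3|exact f1].
    + eapply ex_RInt_Chasles; [exact f2|exact f4].
    + rewrite (chas g (- hi k) (- cc) (- lo k)), (chas g (lo k) cc (hi k)); auto. rewrite r1, r2, r3, r4. ring.
  - assert (E1 : upd hi m cc k = hi k) by (apply upd_other; lia). assert (E2 : upd lo m cc k = lo k) by (apply upd_other; lia).
    rewrite E1, E2 in *.
    assert (IHx : forall x, lo k < Rabs x < hi k ->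
      iint k lo hi (fun t => f (upd t k x)) (g1 x + g2 x)).
    { intros x Hx. apply (IH lo hi _ m cc (g1 x) (g2 x)); [lia | exact Hl' | exact Hc | apply lipb_inner; auto; lra | apply Hg1; auto | apply Hg2; auto]. }
    exists (fun x => g1 x + g2 x). repeat split; auto.
    + apply (ex_RInt_plus g1 g2); auto.
    + apply (ex_RInt_plus g1 g2); auto.
    + rewrite (@RInt_plus R_CompleteNormedModule g1 g2 (- hi k)), (@RInt_plus R_CompleteNormedModule g1 g2 (lo k)); auto.
      unfold plus; simpl. ring.
Qed.
Lemma cos_lip x y : Rabs (cos x - cos y) <= Rabs (x - y).
Proof.
  destruct (MVT_abs cos (fun c => - sin c) y x) as [c [Hc _]].
  intros; apply derivable_pt_lim_cos.
  rewrite Hc, Rabs_Ropp. rewrite <- (Rmult_1_l (Rabs (x - y))) at 2.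
  apply Rmult_le_compat_r. apply Rabs_pos. apply Rabs_le, SIN_bound.
Qed.
Lemma sin_lip x y : Rabs (sin x - sin y) <= Rabs (x - y).
Proof.
  destruct (MVT_abs sin cos y x) as [c [Hc _]].
  intros; apply derivable_pt_lim_sin.
  rewrite Hc. rewrite <- (Rmult_1_l (Rabs (x - y))) at 2.
  apply Rmult_le_compat_r. apply Rabs_pos. apply Rabs_le, COS_bound.
Qed.

Definition lb k lo hi (f : (nat -> R) -> R) := exists L B, 0 <= L /\
  forall t t', cbox k lo hi t -> cbox k lo hi t' ->
    Rabs (f t) <= B /\ Rabs (f t - f t') <= L * distk k t t'.

Lemma lb_lipb k lo hi f : lb k lo hi f -> lipb k lo hi f.
Proof. intros [L [B [HL H]]]. exists L; split; auto. intros; apply H; auto. Qed.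

Lemma distk_nonneg k t t' : 0 <= distk k t t'.
Proof. apply rsum_nonneg; intros; apply Rabs_pos. Qed.

Lemma rsum_term k f j : (forall i, (i < k)%nat -> 0 <= f i) -> (j < k)%nat -> f j <= rsum k f.
Proof.
  induction k; intros H Hj; [lia|]. simpl.
  destruct (Nat.eq_dec j k) as [->|Hne].
  - assert (0 <= rsum k f) by (apply rsum_nonneg; intros; apply H; lia). lra.
  - assert (f j <= rsum k f) by (apply IHk; [intros; apply H; lia| lia]).
    assert (0 <= f k) by (apply H; lia). lra.
Qed.

Lemma lb_const k lo hi c : lb k lo hi (fun _ => c).
Proof.
  exists 0, (Rabs c). split. lra. intros; split. lra.
  unfold Rminus; rewrite Rplus_opp_r, Rabs_R0. rewrite Rmult_0_l; lra.
Qed.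

Lemma lb_coord k lo hi j : lb k lo hi (fun t => t j).
Proof.
  destruct (Compare_dec.lt_dec j k) as [Hj|Hj].
  - exists 1, (hi j). split. lra. intros t t' [Ht1 _] [Ht2 _]. split.
    + apply Ht1; auto.
    + rewrite Rmult_1_l. apply (rsum_term k (fun j => Rabs (t j - t' j))); auto.
      intros; apply Rabs_pos.
  - exists 0, 0. split. lra. intros t t' [_ Ht1] [_ Ht2].
    rewrite Ht1, Ht2 by lia. unfold Rminus. rewrite Rplus_opp_r, Rabs_R0. split; lra.
Qed.

Lemma lb_plus k lo hi f g : lb k lo hi f -> lb k lo hi g -> lb k lo hi (fun t => f t + g t).
Proof.
  intros [L1 [B1 [HL1 H1]]] [L2 [B2 [HL2 H2]]]. exists (L1 + L2), (B1 + B2). split. lra.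
  intros t t' Ht Ht'. destruct (H1 t t' Ht Ht') as [a1 b1]. destruct (H2 t t' Ht Ht') as [a2 b2].
  split.
  - eapply Rle_trans. apply Rabs_triang. lra.
  - replace (f t + g t - (f t' + g t')) with ((f t - f t') + (g t - g t')) by ring.
    eapply Rle_trans. apply Rabs_triang. lra.
Qed.

Lemma lb_mult k lo hi f g : lb k lo hi f -> lb k lo hi g -> lb k lo hi (fun t => f t * g t).
Proof.
  intros [L1 [B1 [HL1 H1]]] [L2 [B2 [HL2 H2]]].
  exists (Rabs B1 * L2 + Rabs B2 * L1), (B1 * B2). split.
  { assert (0 <= Rabs B1) by apply Rabs_pos. assert (0 <= Rabs B2) by apply Rabs_pos. nra. }
  intros t t' Ht Ht'. destruct (H1 t t' Ht Ht') as [a1 b1]. destruct (H2 t t' Ht Ht') as [a2 b2].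
  destruct (H1 t' t Ht' Ht) as [a1' _]. destruct (H2 t' t Ht' Ht) as [a2' _].
  assert (Dn := distk_nonneg k t t').
  split.
  - rewrite Rabs_mult. apply Rmult_le_compat; auto using Rabs_pos.
  - replace (f t * g t - f t' * g t') with (f t * (g t - g t') + g t' * (f t - f t')) by ring.
    eapply Rle_trans. apply Rabs_triang. rewrite !Rabs_mult.
    assert (Rabs (f t) * Rabs (g t - g t') <= Rabs B1 * (L2 * distk k t t')).
    { apply Rmult_le_compat; auto using Rabs_pos. eapply Rle_trans; [exact a1|apply RRle_abs]. }
    assert (Rabs (g t') * Rabs (f t - f t') <= Rabs B2 * (L1 * distk k t t')).
    { apply Rmult_le_compat; auto using Rabs_pos. eapply Rle_trans; [exact a2'|apply RRle_abs]. }
    nra.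
Qed.

Lemma lb_comp k lo hi (h : R -> R) f Bh : (forall x, Rabs (h x) <= Bh) ->
  (forall x y, Rabs (h x - h y) <= Rabs (x - y)) -> lb k lo hi f -> lb k lo hi (fun t => h (f t)).
Proof.
  intros Hb Hl [L [B [HL H]]]. exists L, Bh. split; auto. intros t t' Ht Ht'. split; auto.
  eapply Rle_trans. apply Hl. apply H; auto.
Qed.

Lemma lb_cos k lo hi f : lb k lo hi f -> lb k lo hi (fun t => cos (f t)).
Proof. apply (lb_comp k lo hi cos f 1). intros; apply Rabs_le, COS_bound. apply cos_lip. Qed.
Lemma lb_sin k lo hi f : lb k lo hi f -> lb k lo hi (fun t => sin (f t)).
Proof. apply (lb_comp k lo hi sin f 1). intros; apply Rabs_le, SIN_bound. apply sin_lip. Qed.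

Lemma lb_inv k lo hi f m : 0 < m -> (forall t, cbox k lo hi t -> m <= Rabs (f t)) ->
  lb k lo hi f -> lb k lo hi (fun t => / f t).
Proof.
  intros Hm Hf [L [B [HL H]]]. exists (L / (m * m)), (/ m). split.
  { apply Rmult_le_pos; auto. left; apply Rinv_0_lt_compat; nra. }
  intros t t' Ht Ht'. assert (m1 := Hf t Ht). assert (m2 := Hf t' Ht').
  assert (n1 : f t <> 0) by (intro E; rewrite E, Rabs_R0 in m1; lra).
  assert (n2 : f t' <> 0) by (intro E; rewrite E, Rabs_R0 in m2; lra).
  split.
  - rewrite Rabs_inv. apply Rinv_le_contravar; auto.
  - replace (/ f t - / f t') with ((f t' - f t) * (/ f t * / f t')) by (field; auto).
    rewrite Rabs_mult, Rabs_mult, !Rabs_inv, <- Rabs_Ropp, Ropp_minus_distr.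
    destruct (H t t' Ht Ht') as [_ b].
    assert (/ Rabs (f t) <= / m) by (apply Rinv_le_contravar; auto).
    assert (/ Rabs (f t') <= / m) by (apply Rinv_le_contravar; auto).
    assert (0 <= / Rabs (f t)) by (left; apply Rinv_0_lt_compat; lra).
    assert (0 <= / Rabs (f t')) by (left; apply Rinv_0_lt_compat; lra).
    assert (Dn := distk_nonneg k t t').
    unfold Rdiv. rewrite Rinv_mult.
    assert (/ Rabs (f t) * / Rabs (f t') <= / m * / m) by (apply Rmult_le_compat; auto).
    assert (0 <= Rabs (f t - f t')) by apply Rabs_pos.
    apply Rle_trans with (L * distk k t t' * (/ m * / m)).
    apply Rmult_le_compat; auto. apply Rmult_le_pos; auto.
    nra.
Qed.

Lemma lb_rsum k lo hi N (h : nat -> (nat -> R) -> R) :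
  (forall i, (i < N)%nat -> lb k lo hi (h i)) -> lb k lo hi (fun t => rsum N (fun i => h i t)).
Proof.
  induction N; intros H; simpl. apply lb_const.
  apply (lb_plus k lo hi (fun t => rsum N (fun i => h i t)) (h N)).
  apply IHN; intros; apply H; lia. apply H; lia.
Qed.

Lemma lb_rprod k lo hi N (h : nat -> (nat -> R) -> R) :
  (forall i, (i < N)%nat -> lb k lo hi (h i)) -> lb k lo hi (fun t => rprod N (fun i => h i t)).
Proof.
  induction N; intros H; simpl. apply lb_const.
  apply (lb_mult k lo hi (fun t => rprod N (fun i => h i t)) (h N)).
  apply IHN; intros; apply H; lia. apply H; lia.
Qed.

Lemma lb_pow k lo hi f p : lb k lo hi f -> lb k lo hi (fun t => f t ^ p).
Proof.
  intros H. induction p; simpl. apply lb_const.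
  apply (lb_mult k lo hi f (fun t => f t ^ p)); auto.
Qed.

Lemma lb_mono k lo hi m : lb k lo hi (mono m).
Proof.
  unfold mono. apply (lb_rprod k lo hi (length m) (fun i t => t i ^ nth i m O)).
  intros; apply lb_pow, lb_coord.
Qed.

Lemma lb_evalP k lo hi p : lb k lo hi (evalP p).
Proof.
  induction p as [|mc p IH]; simpl. apply lb_const.
  apply (lb_plus k lo hi (fun t => snd mc * mono (fst mc) t) (evalP p)); auto.
  apply (lb_mult k lo hi (fun _ => snd mc) (mono (fst mc))). apply lb_const. apply lb_mono.
Qed.

Lemma lb_evalPF k lo hi F p : lb k lo hi (evalPF F p).
Proof.
  induction p as [|mc p IH]; simpl. apply lb_const.
  apply (lb_plus k lo hi (fun t => (if excluded_middle_informative (F (embed (fst mc)))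
      then snd mc * mono (fst mc) t else 0)) (evalPF F p)); auto.
  destruct excluded_middle_informative.
  apply (lb_mult k lo hi (fun _ => snd mc) (mono (fst mc))). apply lb_const. apply lb_mono.
  apply lb_const.
Qed.

Lemma lb_phaseP k lo hi d P xi : lb k lo hi (phaseP d P xi).
Proof.
  unfold phaseP. apply (lb_rsum k lo hi d (fun nu t => xi nu * evalP (P nu) t)).
  intros. apply (lb_mult k lo hi (fun _ => xi i) (evalP (P i))). apply lb_const. apply lb_evalP.
Qed.

Lemma lb_phasePF k lo hi d P F xi : lb k lo hi (phasePF d P F xi).
Proof.
  unfold phasePF. apply (lb_rsum k lo hi d (fun nu t => xi nu * evalPF (F nu) (P nu) t)).
  intros. apply (lb_mult k lo hi (fun _ => xi i) (evalPF (F i) (P i))). apply lb_const. apply lb_evalPF.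
Qed.

Lemma rprod_abs k t : Rabs (rprod k t) = rprod k (fun j => Rabs (t j)).
Proof. induction k; simpl. apply Rabs_R1. rewrite Rabs_mult, IHk; auto. Qed.

Lemma rprod_le k f g : (forall j, (j < k)%nat -> 0 <= f j <= g j) -> rprod k f <= rprod k g.
Proof.
  induction k; simpl; intros H. lra.
  apply Rmult_le_compat. apply rprod_nonneg; intros; apply H; lia. apply H; lia.
  apply IHk; intros; apply H; lia. apply H; lia.
Qed.

Lemma lb_integrand k lo hi (ph : (nat -> R) -> R) (c : R -> R) :
  (forall j, (j < k)%nat -> 0 < lo j) -> lb k lo hi ph -> (c = cos \/ c = sin) ->
  lb k lo hi (fun t => c (ph t) / rprod k t).
Proof.
  intros Hl Hph Hc. unfold Rdiv.
  apply (lb_mult k lo hi (fun t => c (ph t)) (fun t => / rprod k t)).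
  destruct Hc as [->| ->]. apply lb_cos; auto. apply lb_sin; auto.
  apply lb_inv with (rprod k lo). apply rprod_pos; auto.
  intros t [Ht _]. rewrite rprod_abs. apply rprod_le. intros j Hj. specialize (Ht j Hj).
  specialize (Hl j Hj). lra.
  apply (lb_rprod k lo hi k (fun i t => t i)). intros; apply lb_coord.
Qed.

Lemma cint_exists n lo hi ph : (forall j, (j < n)%nat -> 0 < lo j <= hi j) ->
  lb n lo hi ph -> exists z, cint n lo hi ph z.
Proof.
  intros Hl Hph.
  assert (Hl0 : forall j, (j < n)%nat -> 0 < lo j) by (intros j Hj; apply Hl; auto).
  destruct (iint_exists n lo hi (fun t => cos (ph t) / rprod n t) Hl) as [v1 H1].
  apply lb_lipb, lb_integrand; auto.
  destruct (iint_exists n lo hi (fun t => sin (ph t) / rprod n t) Hl) as [v2 H2].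
  apply lb_lipb, lb_integrand; auto.
  exists (v1, v2). split; auto.
Qed.
Lemma rpow_small e T : 0 < e -> 0 < T -> exists d0, 0 < d0 /\
  forall dl, 0 < dl < d0 -> Rpower dl e < T.
Proof.
  intros He HT. exists (exp (ln T / e)). split. apply exp_pos.
  intros dl [H1 H2]. unfold Rpower. rewrite <- (exp_ln T) by auto.
  apply exp_increasing. apply ln_increasing in H2; auto. rewrite ln_exp in H2.
  apply Rmult_lt_compat_l with (r := e) in H2; auto.
  replace (e * (ln T / e)) with (ln T) in H2 by (field; lra). lra.
Qed.

Lemma ev_fin N (Pj : nat -> R -> Prop) :
  (forall j, (j < N)%nat -> exists dj, 0 < dj /\ forall dl, 0 < dl < dj -> Pj j dl) ->
  exists d0, 0 < d0 /\ forall dl, 0 < dl < d0 -> forall j, (j < N)%nat -> Pj j dl.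
Proof.
  induction N; intros H.
  - exists 1. split. lra. intros; lia.
  - destruct IHN as [d1 [Hd1 H1]]. intros; apply H; lia.
    destruct (H N (Nat.lt_succ_diag_r N)) as [d2 [Hd2 H2]].
    exists (Rmin d1 d2). split. apply Rmin_pos; auto.
    intros dl [Hdl1 Hdl2] j Hj.
    assert (dl < d1) by (eapply Rlt_le_trans; [exact Hdl2|apply Rmin_l]).
    assert (dl < d2) by (eapply Rlt_le_trans; [exact Hdl2|apply Rmin_r]).
    destruct (Nat.eq_dec j N) as [->|]. apply H2; lra. apply H1; [lra|lia].
Qed.

Lemma rprod_mult k f g : rprod k (fun j => f j * g j) = rprod k f * rprod k g.
Proof. induction k; simpl. ring. rewrite IHk; ring. Qed.

Lemma rsum_minus k f g : rsum k (fun j => f j - g j) = rsum k f - rsum k g.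
Proof. induction k; simpl. ring. rewrite IHk; ring. Qed.

Lemma rsum_abs k f : Rabs (rsum k f) <= rsum k (fun j => Rabs (f j)).
Proof.
  induction k; simpl. rewrite Rabs_R0; lra.
  eapply Rle_trans. apply Rabs_triang. lra.
Qed.

Lemma rsum_le k f g : (forall j, (j < k)%nat -> f j <= g j) -> rsum k f <= rsum k g.
Proof.
  induction k; simpl; intros H. lra.
  assert (rsum k f <= rsum k g) by (apply IHk; intros; apply H; lia).
  assert (f k <= g k) by (apply H; lia). lra.
Qed.

Lemma rsum_const k c : rsum k (fun _ => c) = INR k * c.
Proof. induction k. simpl; ring. change (rsum (S k) (fun _ => c)) with (rsum k (fun _ => c) + c). rewrite IHk, S_INR. ring. Qed.

Lemma rprod_rpower k dl (u : nat -> R) (m : list nat) : 0 < dl ->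
  rprod k (fun j => Rpower dl (u j) ^ nth j m O) = Rpower dl (ip k u (embed m)).
Proof.
  intros Hd. unfold ip. induction k; simpl.
  - rewrite Rpower_O; auto.
  - rewrite IHk, Rpower_plus. f_equal.
    rewrite <- Rpower_pow by (apply exp_pos). rewrite Rpower_mult. reflexivity.
Qed.

Lemma mono_scale n dl u m s : 0 < dl -> length m = n ->
  mono m (cmul (fun j => Rpower dl (u j)) s) = Rpower dl (ip n u (embed m)) * mono m s.
Proof.
  intros Hd Hl. unfold mono, cmul. rewrite Hl.
  rewrite (rprod_ext n _ (fun j => Rpower dl (u j) ^ nth j m O * s j ^ nth j m O)).
  rewrite rprod_mult, rprod_rpower; auto.
  intros; apply Rpow_mult_distr.
Qed.

Lemma mono_bound m s b : (forall j, (j < length m)%nat -> Rabs (s j) <= b j) ->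
  Rabs (mono m s) <= mono m b.
Proof.
  intros H. unfold mono. rewrite rprod_abs. apply rprod_le. intros j Hj.
  rewrite <- RPow_abs. split. apply pow_le, Rabs_pos. apply pow_incr. split. apply Rabs_pos. auto.
Qed.

Lemma evalPF_empty (G : (nat -> R) -> Prop) p s : (forall x, ~ G x) -> evalPF G p s = 0.
Proof.
  intros H. induction p; simpl; auto. destruct excluded_middle_informative as [g|].
  exfalso; eapply H; eauto. rewrite IHp; ring.
Qed.

Lemma poly_err n (u b : nat -> R) (Gf : (nat -> R) -> Prop) r p :
  List.Forall (fun mc => length (fst mc) = n /\
     (Gf (embed (fst mc)) -> ip n u (embed (fst mc)) = r) /\
     (~ Gf (embed (fst mc)) -> ip n u (embed (fst mc)) > r)) p ->
  forall eps, 0 < eps -> exists d0, 0 < d0 /\ forall dl, 0 < dl < d0 ->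
    forall s, (forall j, (j < n)%nat -> Rabs (s j) <= b j) ->
    Rabs (Rpower dl (- r) * evalP p (cmul (fun j => Rpower dl (u j)) s) - evalPF Gf p s) <= eps.
Proof.
  intros HF. induction HF as [|mc p [Hlen [Hin Hout]] HF IH]; intros eps Heps.
  - exists 1. split. lra. intros; simpl. rewrite Rmult_0_r, Rminus_0_r, Rabs_R0. lra.
  - destruct (IH (eps / 2)) as [d1 [Hd1 H1]]. lra.
    set (m := fst mc) in *. set (cf := snd mc) in *.
    assert (Hterm : exists d2, 0 < d2 /\ forall dl, 0 < dl < d2 ->
      forall s, (forall j, (j < n)%nat -> Rabs (s j) <= b j) ->
      Rabs (Rpower dl (- r) * (cf * mono m (cmul (fun j => Rpower dl (u j)) s)) -
            (if excluded_middle_informative (Gf (embed m)) then cf * mono m s else 0)) <= eps / 2).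
    { destruct excluded_middle_informative as [g|g].
      - exists 1. split. lra. intros dl Hdl s Hs. rewrite (mono_scale n) by (auto; lra).
        rewrite (Hin g). replace (Rpower dl (- r) * (cf * (Rpower dl r * mono m s)) - cf * mono m s)
          with (cf * mono m s * (Rpower dl (- r) * Rpower dl r - 1)) by ring.
        rewrite <- Rpower_plus, Rplus_opp_l, Rpower_O by lra.
        rewrite Rminus_diag, Rmult_0_r, Rabs_R0. lra.
      - assert (He : 0 < ip n u (embed m) - r) by (specialize (Hout g); lra).
        set (Bm := Rabs cf * Rabs (mono m b) + 1).
        assert (HB : 0 < Bm).
        { unfold Bm. assert (0 <= Rabs (mono m b)) by apply Rabs_pos.
          assert (0 <= Rabs cf) by apply Rabs_pos. nra. }
        destruct (rpow_small (ip n u (embed m) - r) (eps / 2 / Bm)) as [d2 [Hd2 H2]]; auto.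
        apply Rdiv_lt_0_compat; lra.
        exists d2. split; auto. intros dl Hdl s Hs.
        rewrite (mono_scale n) by (auto; lra).
        replace (Rpower dl (- r) * (cf * (Rpower dl (ip n u (embed m)) * mono m s)) - 0)
          with (cf * mono m s * (Rpower dl (- r) * Rpower dl (ip n u (embed m)))) by ring.
        rewrite <- Rpower_plus. replace (- r + ip n u (embed m)) with (ip n u (embed m) - r) by ring.
        specialize (H2 dl Hdl).
        assert (Hp : 0 < Rpower dl (ip n u (embed m) - r)) by apply exp_pos.
        assert (Hms : Rabs (mono m s) <= Rabs (mono m b)).
        { eapply Rle_trans. apply mono_bound. intros j Hj. apply Hs. rewrite <- Hlen; auto. apply RRle_abs. }
        rewrite !Rabs_mult, (Rabs_right (Rpower _ _)) by lra.
        assert (0 <= Rabs cf) by apply Rabs_pos. assert (0 <= Rabs (mono m s)) by apply Rabs_pos.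
        assert (Rabs cf * Rabs (mono m s) <= Bm) by (unfold Bm; nra).
        assert (E : Bm * (eps / 2 / Bm) = eps / 2) by (field; lra).
        rewrite <- E. apply Rmult_le_compat; auto. apply Rmult_le_pos; auto. lra. lra. }
    destruct Hterm as [d2 [Hd2 H2]].
    exists (Rmin d1 d2). split. apply Rmin_pos; auto.
    intros dl [Hdl1 Hdl2] s Hs.
    assert (dl < d1) by (eapply Rlt_le_trans; [exact Hdl2|apply Rmin_l]).
    assert (dl < d2) by (eapply Rlt_le_trans; [exact Hdl2|apply Rmin_r]).
    simpl. fold m cf.
    specialize (H1 dl ltac:(lra) s Hs). specialize (H2 dl ltac:(lra) s Hs).
    replace (Rpower dl (- r) * (cf * mono m (cmul (fun j => Rpower dl (u j)) s) + evalP p (cmul (fun j => Rpower dl (u j)) s)) -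
      ((if excluded_middle_informative (Gf (embed m)) then cf * mono m s else 0) + evalPF Gf p s))
      with ((Rpower dl (- r) * (cf * mono m (cmul (fun j => Rpower dl (u j)) s)) -
            (if excluded_middle_informative (Gf (embed m)) then cf * mono m s else 0)) +
            (Rpower dl (- r) * evalP p (cmul (fun j => Rpower dl (u j)) s) - evalPF Gf p s)) by ring.
    eapply Rle_trans. apply Rabs_triang. lra.
Qed.
Definition norm1 (z : R * R) := Rabs (fst z) + Rabs (snd z).

Lemma abs_le_cmod1 x y : Rabs x <= cmod (x, y).
Proof.
  unfold cmod; simpl. rewrite <- (sqrt_pow2 (Rabs x)) by apply Rabs_pos.
  apply sqrt_le_1_alt. rewrite pow2_abs. assert (0 <= y ^ 2) by (apply pow2_ge_0). lra.
Qed.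
Lemma abs_le_cmod2 x y : Rabs y <= cmod (x, y).
Proof.
  unfold cmod; simpl. rewrite <- (sqrt_pow2 (Rabs y)) by apply Rabs_pos.
  apply sqrt_le_1_alt. rewrite pow2_abs. assert (0 <= x ^ 2) by (apply pow2_ge_0). lra.
Qed.
Lemma cmod_le_norm1 z : cmod z <= norm1 z.
Proof.
  destruct z as [x y]. unfold cmod, norm1; cbn [fst snd].
  rewrite <- (sqrt_pow2 (Rabs x + Rabs y)) by (assert (0 <= Rabs x) by apply Rabs_pos; assert (0 <= Rabs y) by apply Rabs_pos; lra).
  apply sqrt_le_1_alt. rewrite <- (pow2_abs x), <- (pow2_abs y).
  assert (0 <= Rabs x) by apply Rabs_pos; assert (0 <= Rabs y) by apply Rabs_pos. nra.
Qed.

Lemma cint_ext_lh n lo hi lo' hi' ph z :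
  (forall j, (j < n)%nat -> lo j = lo' j /\ hi j = hi' j) ->
  cint n lo hi ph z -> cint n lo' hi' ph z.
Proof. intros H [H1 H2]; split; eapply iint_ext_lh; eauto. Qed.

Lemma cint_split n lo hi ph m cc z1 z2 : (m < n)%nat ->
  (forall j, (j < n)%nat -> 0 < lo j <= hi j) -> lo m < cc < hi m -> (forall lo hi, lb n lo hi ph) ->
  cint n lo (upd hi m cc) ph z1 -> cint n (upd lo m cc) hi ph z2 ->
  cint n lo hi ph (fst z1 + fst z2, snd z1 + snd z2).
Proof.
  intros Hm Hl Hc Hph [a1 b1] [a2 b2].
  assert (Hl0 : forall j, (j < n)%nat -> 0 < lo j) by (intros j Hj; apply Hl; auto).
  split; simpl; eapply iint_split; eauto; apply lb_lipb, lb_integrand; auto.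
Qed.

Definition lom (A : nat -> R) m (eps : nat -> R) : nat -> R :=
  fun j => if Nat.ltb j m then A j else eps j.

Lemma boxbound n (Sset : nat -> Prop) ph M A B :
  (forall lo hi, lb n lo hi ph) ->
  (forall hi, inI n Sset hi -> exists L, Ilim n ph hi L /\ cmod L <= M) ->
  inI n Sset A -> inI n Sset B -> (forall j, (j < n)%nat -> A j < B j) ->
  forall W, cint n A B ph W -> norm1 W <= 2 ^ n * (2 * M + 2).
Proof.
  intros Hph HI HA HB HAB.
  set (K := 2 * M + 2).
  assert (Q : forall m, (m <= n)%nat -> forall hi, inI n Sset hi -> (forall j, (j < n)%nat -> A j <= hi j) ->
     (forall j, (j < m)%nat -> A j < hi j) -> exists eta, 0 < eta /\
     forall eps, (forall j, (j < n)%nat -> 0 < eps j < eta /\ eps j < A j) ->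
     forall z, cint n (lom A m eps) hi ph z -> norm1 z <= 2 ^ m * K).
  { induction m as [|m IH]; intros Hm hi Hhi HAh HAs.
    - destruct (HI hi Hhi) as [L [HL HLM]].
      destruct (HL 1 ltac:(lra)) as [eta [Heta Heps]].
      exists eta; split; auto. intros eps Heps0 z Hz.
      assert (E : lom A 0 eps = eps) by (apply functional_extensionality; intro j; reflexivity).
      rewrite E in Hz.
      destruct (Heps eps) as [_ Hd]. intros j Hj; apply Heps0; auto.
      specialize (Hd z Hz). destruct z as [z1 z2], L as [l1 l2]. unfold cdist in Hd; simpl in Hd.
      assert (A1 := abs_le_cmod1 (z1 - l1) (z2 - l2)). assert (A2 := abs_le_cmod2 (z1 - l1) (z2 - l2)).
      assert (B1 := abs_le_cmod1 l1 l2). assert (B2 := abs_le_cmod2 l1 l2).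
      unfold norm1; simpl. unfold K.
      assert (Rabs z1 <= Rabs (z1 - l1) + Rabs l1).
      { replace z1 with ((z1 - l1) + l1) at 1 by ring. apply Rabs_triang. }
      assert (Rabs z2 <= Rabs (z2 - l2) + Rabs l2).
      { replace z2 with ((z2 - l2) + l2) at 1 by ring. apply Rabs_triang. }
      lra.
    - assert (Hmn : (m < n)%nat) by lia.
      set (hi1 := upd hi m (A m)).
      assert (Hhi1 : inI n Sset hi1).
      { intros j Hj. unfold hi1, upd. destruct (Nat.eqb_spec j m); [subst; apply HA; auto| apply Hhi; auto]. }
      destruct (IH ltac:(lia) hi1 Hhi1) as [eta1 [He1 H1]].
      { intros j Hj. unfold hi1, upd. destruct (Nat.eqb_spec j m); [subst; lra| apply HAh; auto]. }
      { intros j Hj. unfold hi1, upd. destruct (Nat.eqb_spec j m); [lia| apply HAs; lia]. }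
      destruct (IH ltac:(lia) hi Hhi HAh) as [eta2 [He2 H2]].
      { intros j Hj; apply HAs; lia. }
      exists (Rmin eta1 eta2). split. apply Rmin_pos; auto.
      intros eps Heps z Hz.
      assert (Heps1 : forall j, (j < n)%nat -> 0 < eps j < eta1 /\ eps j < A j).
      { intros j Hj. destruct (Heps j Hj) as [[a b] c]. assert (Rmin eta1 eta2 <= eta1) by apply Rmin_l. repeat split; lra. }
      assert (Heps2 : forall j, (j < n)%nat -> 0 < eps j < eta2 /\ eps j < A j).
      { intros j Hj. destruct (Heps j Hj) as [[a b] c]. assert (Rmin eta1 eta2 <= eta2) by apply Rmin_r. repeat split; lra. }
      set (lo := lom A m eps).
      assert (Hlo : forall j, (j < n)%nat -> 0 < lo j <= hi j).
      { intros j Hj. unfold lo, lom. destruct (Nat.ltb_spec j m).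
        - assert (0 < A j) by (apply HA; auto). assert (A j <= hi j) by auto. lra.
        - destruct (Heps j Hj) as [[a b] c]. assert (A j <= hi j) by auto. lra. }
      assert (Hlo1 : forall j, (j < n)%nat -> 0 < lo j <= hi1 j).
      { intros j Hj. unfold hi1, upd. destruct (Nat.eqb_spec j m).
        - subst. unfold lo, lom. destruct (Nat.ltb_spec m m); [lia|]. destruct (Heps m Hj) as [[a b] c]. lra.
        - apply Hlo; auto. }
      destruct (cint_exists n lo hi1 ph Hlo1 (Hph _ _)) as [z1 Hz1].
      assert (Elo : lom A (S m) eps = upd lo m (A m)).
      { apply functional_extensionality; intro j. unfold lo, lom, upd.
        destruct (Nat.eqb_spec j m). subst. destruct (Nat.ltb_spec m (S m)); [auto|lia].
        destruct (Nat.ltb_spec j (S m)), (Nat.ltb_spec j m); auto; lia. }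
      rewrite Elo in Hz.
      assert (Hsum := cint_split n lo hi ph m (A m) z1 z Hmn Hlo).
      assert (Hc : lo m < A m < hi m).
      { unfold lo, lom. destruct (Nat.ltb_spec m m); [lia|]. destruct (Heps m Hmn) as [[a b] c].
        split; [lra | apply HAs; lia]. }
      specialize (Hsum Hc Hph Hz1 Hz).
      specialize (H2 eps Heps2 _ Hsum). specialize (H1 eps Heps1 _ Hz1).
      unfold norm1 in *; simpl in *.
      assert (Rabs (fst z) <= Rabs (fst z1 + fst z) + Rabs (fst z1)).
      { replace (fst z) with ((fst z1 + fst z) + - fst z1) at 1 by ring.
        eapply Rle_trans. apply Rabs_triang. rewrite Rabs_Ropp. lra. }
      assert (Rabs (snd z) <= Rabs (snd z1 + snd z) + Rabs (snd z1)).
      { replace (snd z) with ((snd z1 + snd z) + - snd z1) at 1 by ring.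
        eapply Rle_trans. apply Rabs_triang. rewrite Rabs_Ropp. lra. }
      lra. }
  intros W HW.
  destruct (Q n (le_n n) B HB) as [eta [Heta Hq]].
  { intros j Hj; left; auto. } { auto. }
  set (eps := fun j => Rmin eta (A j) / 2).
  apply (Hq eps).
  - intros j Hj. assert (0 < A j) by (apply HA; auto). unfold eps.
    assert (Rmin eta (A j) <= eta) by apply Rmin_l. assert (Rmin eta (A j) <= A j) by apply Rmin_r.
    assert (0 < Rmin eta (A j)) by (apply Rmin_pos; auto). repeat split; lra.
  - eapply cint_ext_lh; [|exact HW]. intros j Hj. split; auto.
    unfold lom. destruct (Nat.ltb_spec j n); [auto|lia].
Qed.
Lemma integrand_close n a (c : nat -> R) (x y : R) s :
  (forall j, (j < n)%nat -> 0 < c j) -> (forall j, (j < n)%nat -> 0 < a j) ->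
  inbox n a (fun _ => 0) s \/ True -> (forall j, (j < n)%nat -> a j < Rabs (s j)) ->
  forall (h : R -> R), (forall p q, Rabs (h p - h q) <= Rabs (p - q)) ->
  Rabs (1 * rprod n c * (h x / rprod n (cmul c s)) - h y / rprod n s) <= Rabs (x - y) / rprod n a.
Proof.
  intros Hc Ha _ Hs h Hh.
  assert (Pc : 0 < rprod n c) by (apply rprod_pos; auto).
  assert (Pa : 0 < rprod n a) by (apply rprod_pos; auto).
  assert (Ps : rprod n a <= Rabs (rprod n s)).
  { rewrite rprod_abs. apply rprod_le. intros j Hj. specialize (Hs j Hj). specialize (Ha j Hj). lra. }
  assert (Ps0 : rprod n s <> 0) by (intro E; rewrite E, Rabs_R0 in Ps; lra).
  assert (E : rprod n (cmul c s) = rprod n c * rprod n s) by (unfold cmul; apply rprod_mult).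
  rewrite E.
  replace (1 * rprod n c * (h x / (rprod n c * rprod n s)) - h y / rprod n s)
    with ((h x - h y) * / rprod n s) by (field; split; lra).
  rewrite Rabs_mult, Rabs_inv. unfold Rdiv.
  apply Rmult_le_compat. apply Rabs_pos. left; apply Rinv_0_lt_compat; lra. apply Hh.
  apply Rinv_le_contravar; auto.
Qed.

Theorem mainTheorem17
  (n d : nat) (P : nat -> mpoly)
  (S S0 : nat -> Prop) (F : nat -> (nat -> R) -> Prop) (u : nat -> R)
  (HP : forall nu, (nu < d)%nat -> WFpoly n (P nu))
  (HS : forall j, S j -> (j < n)%nat)
  (HS0 : forall j, S0 j -> S j)
  (HF : forall nu, (nu < d)%nat -> is_face n (Newton (supp (P nu)) S) (F nu))
  (Hsup : exists M, forall (r xi : nat -> R), inI n S r ->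
            exists L, Ilim n (phaseP d P xi) r L /\ cmod L <= M)
  (Hu : forall nu, (nu < d)%nat -> dual_int n S (Newton (supp (P nu)) S) (F nu) u)
  (Hu0 : forall j, (j < n)%nat -> S0 j -> u j = 0)
  (Hu1 : forall j, (j < n)%nat -> S j -> ~ S0 j -> u j > 0) :
  exists M, forall (xi a b : nat -> R),
    inI n S0 a -> inI n S0 b -> (forall j, (j < n)%nat -> a j < b j) ->
    (exists z, cint n a b (phasePF d P F xi) z) /\
    (forall z, cint n a b (phasePF d P F xi) z -> cmod z <= M).
Proof.
  destruct Hsup as [M HM].
  exists (2 ^ n * (2 * M + 2) + 1).
  intros xi a b Ha Hb Hab.
  assert (Ha0 : forall j, (j < n)%nat -> 0 < a j) by (intros; apply Ha; auto).
  assert (Hb0 : forall j, (j < n)%nat -> 0 < b j) by (intros; apply Hb; auto).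
  split.
  { apply cint_exists. intros j Hj; split; [apply Ha0 | left; apply Hab]; auto. apply lb_phasePF. }
  intros Z HZ.
  assert (Hrr : forall nu, exists r, (nu < d)%nat -> (exists x, F nu x) ->
     (forall x, F nu x -> ip n u x = r) /\
     (forall y, Newton (supp (P nu)) S y -> ~ F nu y -> ip n u y > r)).
  { intro nu. destruct (classic ((nu < d)%nat /\ exists x, F nu x)) as [[H1 H2]|H].
    - destruct (Hu nu H1) as [_ [Hne _]]. destruct (Hne H2) as [r Hr]. exists r; auto.
    - exists 0. intros; exfalso; auto. }
  set (rr := fun nu => proj1_sig (constructive_indefinite_description _ (Hrr nu))).
  assert (Hrr' : forall nu, (nu < d)%nat -> (exists x, F nu x) ->
     (forall x, F nu x -> ip n u x = rr nu) /\
     (forall y, Newton (supp (P nu)) S y -> ~ F nu y -> ip n u y > rr nu)).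
  { intro nu. unfold rr. destruct constructive_indefinite_description; auto. }
  set (cc := fun dl j => Rpower dl (u j)).
  set (xi' := fun dl nu => if excluded_middle_informative (exists x, F nu x)
                           then xi nu * Rpower dl (- rr nu) else 0).
  set (ph := fun dl => phaseP d P (xi' dl)).
  set (vb := vol n a b).
  set (pa := rprod n a).
  assert (Hpa : 0 < pa) by (apply rprod_pos; auto).
  assert (Hvb : 0 <= vb) by (apply vol_nonneg; intros j Hj; left; auto).
  set (eps := 1 / (2 * (vb / pa + 1))).
  assert (Hvp : 0 <= vb / pa) by (apply Rdiv_le_0_compat; auto).
  assert (Heps : 0 < eps) by (unfold eps; apply Rdiv_lt_0_compat; lra).
  destruct (ev_fin n (fun j dl => S j -> cc dl j * b j < 1)) as [d1 [Hd1 Ev1]].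
  { intros j Hj. destruct (classic (S j)) as [Sj|nSj].
    - destruct (classic (S0 j)) as [S0j|nS0j].
      + exists 1. split; [lra|]. intros dl Hdl _. unfold cc. rewrite Hu0 by auto.
        rewrite Rpower_O by lra. rewrite Rmult_1_l. apply Hb; auto.
      + destruct (rpow_small (u j) (/ b j)) as [d2 [Hd2 H2]].
        apply Hu1; auto. apply Rinv_0_lt_compat; auto.
        exists d2. split; auto. intros dl Hdl _. specialize (H2 dl Hdl). unfold cc.
        assert (E : / b j * b j = 1) by (field; specialize (Hb0 j Hj); lra).
        rewrite <- E. apply Rmult_lt_compat_r; auto.
    - exists 1. split. lra. intros; contradiction. }
  set (epsn := eps / (INR d + 1)).
  assert (Hepsn : 0 < epsn) by (unfold epsn; apply Rdiv_lt_0_compat; auto; pose proof (pos_INR d); lra).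
  destruct (ev_fin d (fun nu dl => forall s, (forall j, (j < n)%nat -> Rabs (s j) <= b j) ->
      Rabs (xi' dl nu * evalP (P nu) (cmul (cc dl) s) - xi nu * evalPF (F nu) (P nu) s) <= epsn))
    as [d2 [Hd2 Ev2]].
  { intros nu Hnu. unfold xi'. destruct excluded_middle_informative as [Hne|He].
    - destruct (Hrr' nu Hnu Hne) as [Hin Hout].
      destruct (poly_err n u b (F nu) (rr nu) (P nu)) with (eps := epsn / (Rabs (xi nu) + 1))
        as [d3 [Hd3 H3]].
      + destruct (HP nu Hnu) as [_ [_ HFa]].
        apply List.Forall_forall. intros mc Hmc. rewrite List.Forall_forall in HFa.
        destruct (HFa mc Hmc) as [Hlen _]. split; auto.
        assert (HN : Newton (supp (P nu)) S (embed (fst mc))).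
        { exists (cons (embed (fst mc)) nil), (cons 1 nil). repeat split.
          - constructor; [|constructor]. exists (fst mc), (fun _ => 0). repeat split.
            + apply in_map; auto.
            + intros; lra.
            + intros; ring.
          - constructor; [lra|constructor].
          - simpl; ring.
          - intro j; simpl; ring. }
        split; intros; auto.
      + apply Rdiv_lt_0_compat; auto. pose proof (Rabs_pos (xi nu)); lra.
      + exists d3. split; auto. intros dl Hdl s Hs. specialize (H3 dl Hdl s Hs).
        replace (xi nu * Rpower dl (- rr nu) * evalP (P nu) (cmul (cc dl) s) - xi nu * evalPF (F nu) (P nu) s)
          with (xi nu * (Rpower dl (- rr nu) * evalP (P nu) (cmul (fun j => Rpower dl (u j)) s) - evalPF (F nu) (P nu) s))
          by (unfold cc; ring).
        rewrite Rabs_mult.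
        assert (HX : 0 <= Rabs (xi nu)) by apply Rabs_pos.
        apply Rle_trans with (Rabs (xi nu) * (epsn / (Rabs (xi nu) + 1))).
        apply Rmult_le_compat_l; auto.
        assert (E : Rabs (xi nu) * (epsn / (Rabs (xi nu) + 1)) = epsn * (Rabs (xi nu) / (Rabs (xi nu) + 1)))
          by (field; lra).
        rewrite E. assert (Rabs (xi nu) / (Rabs (xi nu) + 1) <= 1).
        { apply Rmult_le_reg_r with (Rabs (xi nu) + 1). lra. field_simplify; lra. }
        assert (0 <= Rabs (xi nu) / (Rabs (xi nu) + 1)) by (apply Rdiv_le_0_compat; lra). nra.
    - exists 1. split. lra. intros dl Hdl s Hs.
      rewrite evalPF_empty. rewrite Rmult_0_l, Rmult_0_r, Rminus_0_r, Rabs_R0. lra.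
      intros x Hx. apply He. exists x; auto. }
  set (dl := Rmin (Rmin d1 d2) 1 / 2).
  assert (Hdl0 : 0 < Rmin (Rmin d1 d2) 1) by (apply Rmin_pos; [apply Rmin_pos|]; lra).
  assert (Hdl1 : 0 < dl < d1).
  { unfold dl. assert (Rmin (Rmin d1 d2) 1 <= Rmin d1 d2) by apply Rmin_l.
    assert (Rmin d1 d2 <= d1) by apply Rmin_l. lra. }
  assert (Hdl2 : 0 < dl < d2).
  { unfold dl. assert (Rmin (Rmin d1 d2) 1 <= Rmin d1 d2) by apply Rmin_l.
    assert (Rmin d1 d2 <= d2) by apply Rmin_r. lra. }
  set (c := cc dl).
  assert (Hc : forall j, 0 < c j) by (intro j; apply exp_pos).
  set (A := cmul c a). set (B := cmul c b).
  assert (HAB : forall j, (j < n)%nat -> A j < B j).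
  { intros j Hj. unfold A, B, cmul. apply Rmult_lt_compat_l; auto. }
  assert (HBS : inI n S B).
  { intros j Hj. unfold B, cmul. split. apply Rmult_lt_0_compat; auto.
    intro Sj. apply (Ev1 dl Hdl1 j Hj Sj). }
  assert (HAS : inI n S A).
  { intros j Hj. unfold A, cmul. split. apply Rmult_lt_0_compat; auto.
    intro Sj. destruct (HBS j Hj) as [_ H]. specialize (H Sj). specialize (HAB j Hj).
    unfold A, B, cmul in *. lra. }
  destruct (cint_exists n A B (ph dl)) as [W HW].
  { intros j Hj. split. destruct (HAS j Hj); auto. left; auto. }
  { apply lb_phaseP. }
  assert (HWb : norm1 W <= 2 ^ n * (2 * M + 2)).
  { apply (boxbound n S (ph dl) M A B); auto.
    - intros; apply lb_phaseP.
    - intros hi Hhi. apply HM; auto. }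
  assert (Hclose : forall s, inbox n a b s ->
      Rabs (ph dl (cmul c s) - phasePF d P F xi s) <= eps).
  { intros s [Hs _]. unfold ph, phaseP, phasePF.
    rewrite <- rsum_minus. eapply Rle_trans. apply rsum_abs.
    apply Rle_trans with (rsum d (fun _ => epsn)).
    apply rsum_le. intros nu Hnu. apply (Ev2 dl Hdl2 nu Hnu s).
    intros j Hj. specialize (Hs j Hj). lra.
    rewrite rsum_const. unfold epsn.
    assert (E : INR d * (eps / (INR d + 1)) = eps * (INR d / (INR d + 1))) by (field; pose proof (pos_INR d); lra).
    rewrite E. pose proof (pos_INR d).
    assert (INR d / (INR d + 1) <= 1).
    { apply Rmult_le_reg_r with (INR d + 1). lra. field_simplify; lra. }
    assert (0 <= INR d / (INR d + 1)) by (apply Rdiv_le_0_compat; lra). nra. }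
  destruct HW as [HW1 HW2]. destruct HZ as [HZ1 HZ2].
  assert (Hcn : forall j, (j < n)%nat -> 0 < c j) by auto.
  assert (Hlh : forall j, (j < n)%nat -> 0 <= a j <= b j) by (intros j Hj; split; left; auto).
  assert (K1 : Rabs (1 * fst W - fst Z) <= eps / pa * vb).
  { apply (iint_approx n a b (fun s => 1 * rprod n c * (cos (ph dl (cmul c s)) / rprod n (cmul c s)))
      (fun t => cos (phasePF d P F xi t) / rprod n t)); auto.
    - intros s Hs. eapply Rle_trans. apply (integrand_close n a c); auto.
      intros j Hj; destruct Hs as [Hs _]; apply Hs; auto. apply cos_lip.
      unfold Rdiv. apply Rmult_le_compat_r. left; apply Rinv_0_lt_compat; auto. apply Hclose; auto.
    - apply (iint_scale n c a b (fun t => cos (ph dl t) / rprod n t) (fst W) 1); auto. }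
  assert (K2 : Rabs (1 * snd W - snd Z) <= eps / pa * vb).
  { apply (iint_approx n a b (fun s => 1 * rprod n c * (sin (ph dl (cmul c s)) / rprod n (cmul c s)))
      (fun t => sin (phasePF d P F xi t) / rprod n t)); auto.
    - intros s Hs. eapply Rle_trans. apply (integrand_close n a c); auto.
      intros j Hj; destruct Hs as [Hs _]; apply Hs; auto. apply sin_lip.
      unfold Rdiv. apply Rmult_le_compat_r. left; apply Rinv_0_lt_compat; auto. apply Hclose; auto.
    - apply (iint_scale n c a b (fun t => sin (ph dl t) / rprod n t) (snd W) 1); auto. }
  assert (Hhalf : eps / pa * vb <= / 2).
  { unfold eps. replace (1 / (2 * (vb / pa + 1)) / pa * vb) with ((vb / pa) / (2 * (vb / pa + 1))) by (field; lra).
    set (q := vb / pa) in *.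
    assert (E : q / (2 * (q + 1)) = / 2 * (q / (q + 1))) by (field; lra).
    assert (q / (q + 1) <= 1).
    { apply Rmult_le_reg_r with (q + 1). lra. unfold Rdiv. rewrite Rmult_assoc, Rinv_l; lra. }
    rewrite E. lra. }
  rewrite Rmult_1_l in K1, K2.
  eapply Rle_trans. apply cmod_le_norm1. unfold norm1 in *.
  assert (Rabs (fst Z) <= Rabs (fst W) + Rabs (fst W - fst Z)).
  { replace (fst Z) with (fst W - (fst W - fst Z)) at 1 by ring. unfold Rminus at 1.
    eapply Rle_trans. apply Rabs_triang. rewrite Rabs_Ropp. lra. }
  assert (Rabs (snd Z) <= Rabs (snd W) + Rabs (snd W - snd Z)).
  { replace (snd Z) with (snd W - (snd W - snd Z)) at 1 by ring. unfold Rminus at 1.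
    eapply Rle_trans. apply Rabs_triang. rewrite Rabs_Ropp. lra. }
  lra.
Qed.
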